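(* Let $\mathcal{H}$ be a complex Hilbert space and $T\in\mathbb{B}(\mathcal{H})$. Then the following conditions are equivalent: (i) $w_{\Omega}(T) = \frac{1}{2}\Omega(T)$; (ii) $\Omega(T) = 2\sqrt{2}\,\|{\rm Re}(e^{i\theta}T)\|$ for all $\theta \in \mathbb{R}$.
   Context: $\mathbb{B}(\mathcal{H})$ is the algebra of bounded linear operators on $\mathcal{H}$ and $\|\cdot\|$ the usual operator norm. Dragomir's norm is $\Omega(T)=\sup\{\|\zeta T+\eta T^*\|:\ \zeta,\eta\in\mathbb{C},\ |\zeta|^2+|\eta|^2\le 1\}$. For $A\in\mathbb{B}(\mathcal{H})$, ${\rm Re}(A)=\frac{A+A^*}{2}$, and $w_\Omega(T)=\sup_{\theta\in\mathbb{R}}\Omega\big({\rm Re}(e^{i\theta}T)\big)$. *)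

(* Defs.v *)
(* A complex Hilbert space is encoded
   explicitly: a C-module V (C = R[i], R : realType) with an inner product,
   complete for the induced norm. *)
From HB Require Import structures.
From mathcomp Require Import all_boot all_order all_algebra.
From mathcomp Require Import complex.
From mathcomp Require Import all_classical all_reals.
From mathcomp Require Import trigo.
Set Implicit Arguments. Unset Strict Implicit. Unset Printing Implicit Defensive.
Import Order.TTheory GRing.Theory Num.Theory.
Local Open Scope ring_scope.
Local Open Scope classical_set_scope.

Section Hilbert.
Variables (R : realType) (V : lmodType R[i]).
Implicit Types (ip : V -> V -> R[i]) (T S : V -> V).

Definition is_inner_product ip : Prop :=
  [/\ (forall (a : R[i]) x y z, ip (a *: x + y) z = a * ip x z + ip y z),
      (forall x y, ip y x = conjc (ip x y)),
      (forall x, complex.Im (ip x x) = 0 /\ 0 <= complex.Re (ip x x)) &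
      (forall x, ip x x = 0 -> x = 0)].

Definition hnorm ip (x : V) : R := Num.sqrt (complex.Re (ip x x)).

Definition hcomplete ip : Prop :=
  forall u : nat -> V,
    (forall e : R, 0 < e -> exists N : nat, forall m n : nat,
        (N <= m)%N -> (N <= n)%N -> hnorm ip (u m - u n) < e) ->
    exists l : V, forall e : R, 0 < e -> exists N : nat, forall n : nat,
        (N <= n)%N -> hnorm ip (u n - l) < e.

Definition is_hilbert ip : Prop := is_inner_product ip /\ hcomplete ip.

Definition bounded_linear ip T : Prop :=
  (forall (a : R[i]) x y, T (a *: x + y) = a *: T x + T y) /\
  exists M : R, forall x, hnorm ip (T x) <= M * hnorm ip x.

Definition is_adjoint ip T S : Prop := forall x y, ip (T x) y = ip x (S y).

Definition opnorm ip T : R :=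
  sup [set hnorm ip (T x) | x in [set x | hnorm ip x <= 1]].

(* Dragomir's norm  Omega(T) = sup { ||z T + w T^*|| : |z|^2+|w|^2 <= 1 },
   where Ts is the adjoint of T *)
Definition Omega ip T Ts : R :=
  sup [set opnorm ip (fun x => zw.1 *: T x + zw.2 *: Ts x) |
        zw in [set zw : R[i] * R[i] | `|zw.1| ^+ 2 + `|zw.2| ^+ 2 <= (1 : R[i])]].

Definition expi (t : R) : R[i] := Complex (cos t) (sin t).

Definition ReOp T Ts : V -> V := fun x => (2 : R[i])^-1 *: (T x + Ts x).

Definition rotOp (t : R) T : V -> V := fun x => expi t *: T x.
Definition rotOpAdj (t : R) Ts : V -> V := fun x => conjc (expi t) *: Ts x.

Definition ReRot (t : R) T Ts : V -> V := ReOp (rotOp t T) (rotOpAdj t Ts).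
Definition ReRotAdj (t : R) T Ts : V -> V := ReOp (rotOpAdj t Ts) (rotOp t T).

Definition wOmega ip T Ts : R :=
  sup [set Omega ip (ReRot t T Ts) (ReRotAdj t T Ts) | t in [set: R]].

End Hilbert.

(* Main.v *)
Require Import Defs.
From HB Require Import structures.
From mathcomp Require Import all_boot all_order all_algebra.
From mathcomp Require Import complex.
From mathcomp Require Import all_classical all_reals.
From mathcomp Require Import trigo.
From mathcomp Require Import ring lra.
Import Order.TTheory GRing.Theory Num.Theory.
Local Open Scope ring_scope.
Set Implicit Arguments. Unset Strict Implicit.

Section Hil.
Variables (R : realType) (V : lmodType R[i]) (ip : V -> V -> R[i]).
Hypothesis Hip : is_inner_product ip.
Local Open Scope complex_scope.

Lemma cE (z : R[i]) : z = Complex (complex.Re z) (complex.Im z).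
Proof. by case: z. Qed.

Definition q x := complex.Re (ip x x).
Definition nc (c : R[i]) : R := Num.sqrt (complex.Re c ^+ 2 + complex.Im c ^+ 2).

Lemma ipDl x y z : ip (x + y) z = ip x z + ip y z.
Proof. case: Hip => h _ _ _. by have := h 1 x y z; rewrite scale1r mul1r. Qed.
Lemma ip0l z : ip 0 z = 0.
Proof.
have h := ipDl 0 0 z; rewrite addr0 in h.
have := congr1 (fun u => u - ip 0 z) h.
by rewrite /= subrr addrK => <-.
Qed.
Lemma ipZl a x z : ip (a *: x) z = a * ip x z.
Proof. case: Hip => h _ _ _. by have := h a x 0 z; rewrite addr0 ip0l addr0. Qed.
Lemma ipC x y : ip y x = conjc (ip x y).
Proof. by case: Hip. Qed.
Lemma ipDr z x y : ip z (x + y) = ip z x + ip z y.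
Proof. by rewrite [LHS]ipC ipDl raddfD (ipC x z) (ipC y z). Qed.
Lemma ipZr z a x : ip z (a *: x) = conjc a * ip z x.
Proof. by rewrite [LHS]ipC ipZl rmorphM (ipC x z). Qed.
Lemma ip0r z : ip z 0 = 0.
Proof. by rewrite ipC ip0l raddf0. Qed.
Lemma ipxx x : ip x x = (q x)%:C.
Proof. case: Hip => _ _ h _; rewrite (cE (ip x x)) (proj1 (h x)) complexr0 //. Qed.
Lemma q_ge0 x : 0 <= q x.
Proof. by case: Hip => _ _ h _; case: (h x). Qed.
Lemma q0 x : q x = 0 -> x = 0.
Proof. case: Hip => _ _ _ h e; apply: h; by rewrite ipxx e. Qed.

Lemma qZ c x : q (c *: x) = (complex.Re c ^+ 2 + complex.Im c ^+ 2) * q x.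
Proof.
rewrite /q ipZl ipZr ipxx -/(q x); case: c => a b; rewrite -complexr0 /=.
simpc; rewrite /=; ring.
Qed.

Lemma qlin (a b : R) x y : q (a%:C *: x + b%:C *: y)
  = a ^+ 2 * q x + 2 * a * b * complex.Re (ip x y) + b ^+ 2 * q y.
Proof.
rewrite /q !ipDl !ipDr !ipZl !ipZr (ipC x y) !ipxx -/(q x) -/(q y).
case: (ip x y) => u v; rewrite -!complexr0; simpc; rewrite /=; ring.
Qed.

Lemma qD x y : q (x + y) = q x + 2 * complex.Re (ip x y) + q y.
Proof.
rewrite /q !ipDl !ipDr (ipC x y) !ipxx -/(q x) -/(q y).
case: (ip x y) => u v; rewrite -!complexr0; simpc; rewrite /=; ring.
Qed.

Lemma hnormE x : hnorm ip x = Num.sqrt (q x). Proof. by []. Qed.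
Lemma hnorm_ge0 x : 0 <= hnorm ip x. Proof. exact: sqrtr_ge0. Qed.
Lemma hnorm_sq x : hnorm ip x ^+ 2 = q x. Proof. by rewrite hnormE sqr_sqrtr // q_ge0. Qed.
Lemma hnorm0 : hnorm ip 0 = 0.
Proof. by rewrite hnormE /q ip0l sqrtr0. Qed.

Lemma CS x y : complex.Re (ip x y) <= hnorm ip x * hnorm ip y.
Proof.
have := q_ge0 y; rewrite le_eqVlt => /orP [/eqP c0|cp].
- rewrite (q0 (esym c0)) ip0r /=; exact: mulr_ge0 (hnorm_ge0 _) (hnorm_ge0 _).
- set b := complex.Re (ip x y).
  have h := q_ge0 ((q y)%:C *: x + (- b)%:C *: y); rewrite qlin in h.
  have hab : b ^+ 2 <= q x * q y by nra.
  rewrite !hnormE -sqrtrM ?q_ge0 //.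
  apply: le_trans (ler_norm b) _; rewrite -sqrtr_sqr.
  by rewrite ler_sqrt // mulr_ge0 ?q_ge0.
Qed.

Lemma hnormD x y : hnorm ip (x + y) <= hnorm ip x + hnorm ip y.
Proof.
rewrite [hnorm ip (x + y)]hnormE qD.
rewrite -[X in _ <= X]ger0_norm ?addr_ge0 ?hnorm_ge0 // -sqrtr_sqr.
rewrite ler_sqrt ?sqr_ge0 //.
have h := CS x y.
rewrite sqrrD !hnorm_sq. nra.
Qed.

Lemma nc_ge0 c : 0 <= nc c. Proof. exact: sqrtr_ge0. Qed.

Lemma hnormZ c x : hnorm ip (c *: x) = nc c * hnorm ip x.
Proof. by rewrite !hnormE qZ sqrtrM // addr_ge0 ?sqr_ge0. Qed.

Lemma nc_real (r : R) : nc (r%:C) = `|r|.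
Proof.
rewrite /nc -complexr0 /=.
have -> : (0:R) ^+ 2 = 0 by rewrite expr2 mul0r.
by rewrite addr0 sqrtr_sqr.
Qed.

Lemma nc_expi t : nc (expi t) = 1.
Proof. by rewrite /nc /expi /= cos2Dsin2 sqrtr1. Qed.

Lemma nc_conj c : nc (conjc c) = nc c.
Proof. by case: c => a b; rewrite /nc /= sqrrN. Qed.

Lemma half_real : (2 : R[i])^-1 = (2^-1 : R)%:C.
Proof. by rewrite fmorphV rmorph_nat. Qed.

Lemma nc_half : nc (2 : R[i])^-1 = 2^-1.
Proof. by rewrite half_real nc_real ger0_norm // invr_ge0. Qed.

Lemma adj_bound T Ts M : (forall x, hnorm ip (T x) <= M * hnorm ip x) ->
  is_adjoint ip T Ts -> forall y, hnorm ip (Ts y) <= `|M| * hnorm ip y.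
Proof.
move=> hT hA y.
have e : hnorm ip (Ts y) ^+ 2 = complex.Re (ip (T (Ts y)) y).
  by rewrite hnorm_sq /q hA.
have h1 := CS (T (Ts y)) y.
have h2 := hT (Ts y).
have h3 := hnorm_ge0 (Ts y). have h4 := hnorm_ge0 y.
have h5 : M <= `|M| := ler_norm M. have h6 := normr_ge0 M.
set n := hnorm ip (Ts y) in e h2 h3 *; set m := hnorm ip y in h1 h3 h4 *.
set K := `|M| in h5 h6 *. set a := hnorm ip (T (Ts y)) in h1 h2.
have s1 : a * m <= M * n * m by rewrite ler_wpM2r.
have s2 : M * n * m <= K * n * m by rewrite -!mulrA ler_wpM2r // mulr_ge0.
have s3 : n ^+ 2 <= K * n * m by rewrite e; apply: le_trans h1 (le_trans s1 s2).
have s4 : 0 <= K * m by rewrite mulr_ge0.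
rewrite expr2 in s3.
case: (lerP n (K * m)) => // hh.
have : 0 < n * (n - K * m) by rewrite mulr_gt0 ?subr_gt0 // (le_lt_trans s4 hh).
move=> hp; nra.
Qed.

End Hil.

Section Sup.
Variable R : realType.
Local Open Scope classical_set_scope.

Lemma sup_ge0 (E : set R) : E !=set0 -> (forall e, E e -> 0 <= e) -> 0 <= sup E.
Proof.
move=> [e Ee] h; have [hs|hs] := pselect (has_sup E).
- exact: le_trans (h e Ee) (sup_upper_bound hs Ee).
- by rewrite sup_out.
Qed.

Lemma sup_ub (E : set R) K e : (forall y, E y -> y <= K) -> E e -> e <= sup E.
Proof.
move=> h Ee; have hub : has_ubound E by exists K => y /h.
by move/ubP: (ub_le_sup hub); apply.
Qed.
Arguments sup_ub {E K e}.

Lemma sup_max (E : set R) x : E x -> (forall e, E e -> e <= x) -> sup E = x.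
Proof.
move=> Ex h; apply/le_anti/andP; split.
- by apply: ge_sup; [exists x | move=> e /h].
- exact: (sup_ub h Ex).
Qed.

Lemma sup_scale {T} (B : set T) (f g : T -> R) (c K : R) : 0 <= c -> B !=set0 ->
  (forall x, B x -> g x <= K) -> (forall x, B x -> f x = c * g x) ->
  sup (f @` B) = c * sup (g @` B).
Proof.
move=> c0 [x0 Bx0] hK hf.
have hg : forall y, (g @` B) y -> y <= K by move=> _ [x Bx <-]; exact: hK.
have hfb : forall y, (f @` B) y -> y <= c * K.
  by move=> _ [x Bx <-]; rewrite hf // ler_wpM2l // hK.
apply/le_anti/andP; split.
- apply: ge_sup; first by exists (f x0), x0.
  move=> _ [x Bx <-]; rewrite hf // ler_wpM2l //.
  by apply: (sup_ub hg); exists x.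
- have [c00|cp] := eqVneq c 0.
  + rewrite c00 mul0r; apply: sup_ge0; first by exists (f x0), x0.
    by move=> _ [x Bx <-]; rewrite hf // c00 mul0r.
  + have {}cp : 0 < c by rewrite lt_neqAle eq_sym cp.
    have : sup (g @` B) <= sup (f @` B) / c.
      apply: ge_sup; first by exists (g x0), x0.
      move=> _ [x Bx <-]; rewrite ler_pdivlMr // mulrC -hf //.
      by apply: (sup_ub hfb); exists x.
    by rewrite ler_pdivlMr // mulrC.
Qed.
End Sup.

Section Cx.
Variable R : realType.
Local Open Scope complex_scope.

Lemma Dcond (z w : R[i]) : (`|z| ^+ 2 + `|w| ^+ 2 <= (1 : R[i])) =
  (complex.Re z ^+ 2 + complex.Im z ^+ 2 + (complex.Re w ^+ 2 + complex.Im w ^+ 2) <= 1).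
Proof.
rewrite -!add_Re2_Im2 -rmorphD.
have -> : (1 : R[i]) = 1%:C by [].
by rewrite lecR.
Qed.

Lemma expi0 : expi 0 = 1 :> R[i].
Proof. by rewrite /expi cos0 sin0. Qed.
Lemma expi0c : conjc (expi 0) = 1 :> R[i].
Proof. rewrite /expi cos0 sin0 /=. by rewrite oppr0. Qed.
Lemma expi1 : expi (pi / 2) = 'i%C :> R[i].
Proof. by rewrite /expi cos_pihalf sin_pihalf. Qed.
Lemma expi1c : conjc (expi (pi / 2)) = - 'i%C :> R[i].
Proof. rewrite /expi cos_pihalf sin_pihalf /=. by simpc. Qed.
Lemma ii : 'i%C * 'i%C = -1 :> R[i].
Proof. by rewrite -expr2 sqr_i. Qed.
Lemma ReDc (z w : R[i]) : complex.Re (z + w) = complex.Re z + complex.Re w.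
Proof. by case: z; case: w. Qed.
Lemma ImDc (z w : R[i]) : complex.Im (z + w) = complex.Im z + complex.Im w.
Proof. by case: z; case: w. Qed.
Lemma Re_iB (z w : R[i]) : complex.Re ('i%C * (w - z)) = - (complex.Im w - complex.Im z).
Proof. case: z => a b; case: w => c d; simpc; rewrite /=; ring. Qed.
Lemma Im_iB (z w : R[i]) : complex.Im ('i%C * (w - z)) = complex.Re w - complex.Re z.
Proof. case: z => a b; case: w => c d; simpc; rewrite /=; ring. Qed.
End Cx.

Section Main.
Local Open Scope classical_set_scope.
Local Open Scope complex_scope.
Lemma omega_bound (R : realType) (V : lmodType R[i]) (ip : V -> V -> R[i])
  (Hip : is_inner_product ip) (T Ts : V -> V) (W : R) :
  (forall t x, hnorm ip x <= 1 -> hnorm ip (ReRot t T Ts x) <= opnorm ip (ReRot t T Ts)) ->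
  opnorm ip (ReRot 0 T Ts) <= W -> opnorm ip (ReRot (pi / 2) T Ts) <= W ->
  Omega ip T Ts <= 2 * W.
Proof.
move=> hN h0 h1.
have W0 : 0 <= W.
  apply: le_trans h0; apply: sup_ge0; first by exists (hnorm ip (ReRot 0 T Ts 0)), 0 => //=; rewrite (hnorm0 Hip).
  by move=> _ [x _ <-]; exact: hnorm_ge0.
apply: ge_sup.
  exists (opnorm ip (fun x => 0 *: T x + 0 *: Ts x)), (0, 0) => //=.
  by rewrite Dcond /= expr2 !mul0r !addr0.
move=> _ [[z w] /= Dzw <-].
rewrite Dcond in Dzw.
apply: ge_sup; first by exists (hnorm ip (z *: T 0 + w *: Ts 0)), 0 => //=; rewrite (hnorm0 Hip).
move=> _ [x /= Bx <-].
have -> : z *: T x + w *: Ts x = (z + w) *: ReRot 0 T Ts x + ('i%C * (w - z)) *: ReRot (pi / 2) T Ts x.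
  rewrite /ReRot /ReOp /rotOp /rotOpAdj expi0c expi1c expi0 expi1.
  rewrite !scalerDr !scalerA addrACA -!scalerDl.
  have h2 : (2 : R[i])^-1 * 2 = 1 by rewrite mulVf // pnatr_eq0.
  congr (_ *: _ + _ *: _).
    symmetry; transitivity ((2:R[i])^-1 * ((z + w) + (w - z) * ('i%C * 'i%C))); first by ring.
    rewrite ii; transitivity ((2:R[i])^-1 * 2 * z); first by ring.
    by rewrite h2 mul1r.
    symmetry; transitivity ((2:R[i])^-1 * ((z + w) - (w - z) * ('i%C * 'i%C))); first by ring.
    rewrite ii; transitivity ((2:R[i])^-1 * 2 * w); first by ring.
    by rewrite h2 mul1r.
apply: le_trans (hnormD Hip _ _) _.
rewrite (hnormZ Hip (z + w)) (hnormZ Hip ('i%C * (w - z))).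
have hA0 := hN 0 x Bx. have hA1 := hN (pi / 2) x Bx.
have P0 := nc_ge0 (z + w). have Q0 := nc_ge0 ('i%C * (w - z)).
have hPQ : nc (z + w) + nc ('i%C * (w - z)) <= 2.
  have eP : nc (z + w) ^+ 2 = (complex.Re z + complex.Re w) ^+ 2 + (complex.Im z + complex.Im w) ^+ 2.
    by rewrite /nc sqr_sqrtr ?addr_ge0 ?sqr_ge0 // ReDc ImDc.
  have eQ : nc ('i%C * (w - z)) ^+ 2 = (complex.Re w - complex.Re z) ^+ 2 + (complex.Im w - complex.Im z) ^+ 2.
    by rewrite /nc sqr_sqrtr ?addr_ge0 ?sqr_ge0 // Re_iB Im_iB sqrrN addrC.
  have hs : nc (z + w) ^+ 2 + nc ('i%C * (w - z)) ^+ 2 <= 2.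
    rewrite eP eQ; nra.
  move: hs P0 Q0; set P := nc (z + w); set Q := nc _ => hs P0 Q0.
  have := sqr_ge0 (P - Q).
  have : 0 <= P + Q by rewrite addr_ge0.
  nra.
have a1 := hnorm_ge0 ip (ReRot 0 T Ts x). have a2 := hnorm_ge0 ip (ReRot (pi / 2) T Ts x).
have b1 : nc (z + w) * hnorm ip (ReRot 0 T Ts x) <= nc (z + w) * W.
  by rewrite ler_wpM2l // (le_trans hA0 h0).
have b2 : nc ('i%C * (w - z)) * hnorm ip (ReRot (pi / 2) T Ts x) <= nc ('i%C * (w - z)) * W.
  by rewrite ler_wpM2l // (le_trans hA1 h1).
have b3 : (nc (z + w) + nc ('i%C * (w - z))) * W <= 2 * W by rewrite ler_wpM2r.
apply: le_trans b3; rewrite [X in _ <= X]mulrDl; exact: lerD.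
Qed.

Lemma omegaA (R : realType) (V : lmodType R[i]) (ip : V -> V -> R[i])
  (Hip : is_inner_product ip) (T Ts : V -> V) (t K : R) :
  (forall x, hnorm ip x <= 1 -> hnorm ip (ReRot t T Ts x) <= K) ->
  Omega ip (ReRot t T Ts) (ReRotAdj t T Ts) = Num.sqrt 2 * opnorm ip (ReRot t T Ts).
Proof.
move=> hK.
set A := ReRot t T Ts. set N := opnorm ip A. set s := Num.sqrt (2 : R).
have B0 : [set x | hnorm ip x <= 1] 0 by rewrite /= (hnorm0 Hip) ler01.
have N0 : 0 <= N.
  apply: sup_ge0; first by exists (hnorm ip (A 0)), 0.
  by move=> _ [x _ <-]; exact: hnorm_ge0.
have e : forall zw : R[i] * R[i], [set zw : R[i] * R[i] | `|zw.1| ^+ 2 + `|zw.2| ^+ 2 <= (1 : R[i])] zw ->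
    opnorm ip (fun x => zw.1 *: A x + zw.2 *: ReRotAdj t T Ts x) = nc (zw.1 + zw.2) * N.
  move=> [z w] _ /=.
  have -> : (fun x => z *: A x + w *: ReRotAdj t T Ts x) = (fun x => (z + w) *: A x).
    apply: boolp.funext => x; rewrite scalerDl; congr (_ + _ *: _).
    by rewrite /ReRotAdj /A /ReRot /ReOp addrC.
  rewrite /opnorm; apply: (sup_scale (nc_ge0 _) _ hK).
    by exists 0.
  by move=> x _; rewrite (hnormZ Hip).
have s2 : s ^+ 2 = 2 by rewrite sqr_sqrtr.
have s0 : 0 <= s by rewrite sqrtr_ge0.
rewrite /Omega (eq_imagel e).
apply: sup_max.
- exists ((s / 2)%:C, (s / 2)%:C).
    rewrite /= Dcond -complexr0 /=.
    have -> : (0:R) ^+ 2 = 0 by rewrite expr2 mul0r.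
    rewrite !addr0 expr_div_n s2; lra.
  rewrite /= -rmorphD nc_real ger0_norm.
    by congr (_ * _); rewrite -splitr.
  by rewrite addr_ge0 // divr_ge0.
- move=> _ [[z w] /= Dzw <-]; rewrite Dcond in Dzw.
  rewrite ler_wpM2r // /nc /s ler_sqrt // ReDc ImDc.
  have := sqr_ge0 (complex.Re z - complex.Re w); have := sqr_ge0 (complex.Im z - complex.Im w).
  nra.
Qed.


End Main.

Local Open Scope classical_set_scope.
Theorem theorem3p2 (R : realType) (V : lmodType R[i]) (ip : V -> V -> R[i])
  (HH : is_hilbert ip) (T Ts : V -> V)
  (HT : bounded_linear ip T) (Hadj : is_adjoint ip T Ts) :
  wOmega ip T Ts = 2^-1 * Omega ip T Ts <->
  (forall t : R,
     Omega ip T Ts = 2 * Num.sqrt 2 * opnorm ip (ReRot t T Ts)).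
Proof.
case: HH => Hip _; case: HT => _ [M hM].
set K := `|M|.
have K0 : 0 <= K by rewrite normr_ge0.
have hT : forall x, hnorm ip (T x) <= K * hnorm ip x.
  by move=> x; apply: le_trans (hM x) _; rewrite ler_wpM2r ?hnorm_ge0 ?ler_norm.
have hTs := adj_bound Hip hM Hadj.
have hA : forall t x, hnorm ip x <= 1 -> hnorm ip (ReRot t T Ts x) <= K.
  move=> t x Bx; rewrite /ReRot /ReOp /rotOp /rotOpAdj (hnormZ Hip) nc_half.
  apply: le_trans (ler_wpM2l _ (hnormD Hip _ _)) _; first by rewrite invr_ge0.
  rewrite !(hnormZ Hip) nc_expi nc_conj nc_expi !mul1r.
  have := hT x; have := hTs x; have := hnorm_ge0 ip x; rewrite -/K; nra.
have B0 : [set x | hnorm ip x <= 1] 0 by rewrite /= (hnorm0 Hip) ler01.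
have hN : forall t x, hnorm ip x <= 1 -> hnorm ip (ReRot t T Ts x) <= opnorm ip (ReRot t T Ts).
  move=> t x Bx; apply: (sup_ub (K := K)); last by exists x.
  by move=> _ [y By <-]; exact: hA.
have N0 : forall t, 0 <= opnorm ip (ReRot t T Ts).
  move=> t; apply: sup_ge0; first by exists (hnorm ip (ReRot t T Ts 0)), 0.
  by move=> _ [x _ <-]; exact: hnorm_ge0.
have NK : forall t, opnorm ip (ReRot t T Ts) <= K.
  move=> t; apply: ge_sup; first by exists (hnorm ip (ReRot t T Ts 0)), 0.
  by move=> _ [x Bx <-]; exact: hA.
set s := Num.sqrt (2 : R).
have hOm : forall t, Omega ip (ReRot t T Ts) (ReRotAdj t T Ts) = s * opnorm ip (ReRot t T Ts).
  by move=> t; exact: (omegaA Hip (hA t)).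
have wE : wOmega ip T Ts = sup [set s * opnorm ip (ReRot t T Ts) | t in [set: R]].
  by rewrite /wOmega (eq_imagel (fun t _ => hOm t)).
have s2 : s ^+ 2 = 2 by rewrite sqr_sqrtr.
have s0 : 0 <= s by rewrite sqrtr_ge0.
have s1 : 1 < s by nra.
have sp : 0 < s by lra.
have Om0 : 0 <= Omega ip T Ts.
  apply: sup_ge0.
    exists (opnorm ip (fun x => 0 *: T x + 0 *: Ts x)), (0, 0) => //=.
    by rewrite Dcond /= expr2 !mul0r !addr0.
  move=> _ [[z w] _ <-]; apply: sup_ge0; first by exists (hnorm ip (z *: T 0 + w *: Ts 0)), 0.
  by move=> _ [x _ <-]; exact: hnorm_ge0.
set Om := Omega ip T Ts in Om0 *.
split.
- move=> hw t.
  have ht : forall t, s * opnorm ip (ReRot t T Ts) <= 2^-1 * Om.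
    move=> t'; rewrite -hw wE; apply: (sup_ub (K := s * K)); last by exists t'.
    by move=> _ [t'' _ <-]; rewrite ler_wpM2l.
  have hW : forall t, opnorm ip (ReRot t T Ts) <= Om / (2 * s).
    move=> t'; rewrite ler_pdivlMr ?mulr_gt0 //; have := ht t'; lra.
  have hb : Om <= 2 * (Om / (2 * s)) := omega_bound Hip hN (hW 0) (hW (pi / 2)).
  have e2 : 2 * (Om / (2 * s)) * s = Om by field; rewrite gt_eqF.
  have hb' := ler_wpM2r s0 hb; rewrite e2 in hb'.
  have Om00 : Om = 0 by apply/le_anti; rewrite Om0 andbT; nra.
  have := ht t; have := N0 t; rewrite Om00 => n0 n1.
  have : opnorm ip (ReRot t T Ts) = 0 by apply/le_anti; rewrite n0 andbT; nra.
  by move=> ->; rewrite mulr0.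
- move=> h; rewrite wE.
  have h2 : (2:R)^-1 * 2 = 1 by rewrite mulVf // pnatr_eq0.
  apply: sup_max.
    by exists 0 => //; rewrite [in RHS](h 0) !mulrA h2 mul1r.
  by move=> _ [t _ <-]; rewrite [in X in _ <= X](h t) !mulrA h2 mul1r.
Qed.
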